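(* Let $R_2=\sup_{p\ge0}p\,\big(1-F(2p)\big)$, the maximal revenue from offering one positional good at price $p$ in addition to a free low-level position. Then $$R_2\ \ge\ \tfrac12\sup_{s\in\mathcal S(0)}\int_0^{\bar\theta}J(\theta)s(\theta)\,dF(\theta).$$
   Context: Let $0<\bar\theta<\infty$, $\Theta=[0,\bar\theta]$, $F$ a cdf on $\Theta$ with continuous, strictly positive density $f$, $dF=f\,d\theta$, extended by $F(x)=1$ for $x\ge\bar\theta$; $J(\theta)=\theta-\frac{1-F(\theta)}{f(\theta)}$. For bounded measurable $a,b$ on $\Theta$, write $b\in\mathrm{MPS}(a)$ if $\int_x^{\bar\theta}b\,dF\le\int_x^{\bar\theta}a\,dF$ for all $x\in\Theta$, with equality at $x=0$. $\mathcal S(0)$ is the set of nondecreasing $s:\Theta\to[0,1]$ with $s\in\mathrm{MPS}(F)$. The supremum on the right is the maximal revenue when exclusion is impossible. *)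

(* Defs.v *)
From Stdlib Require Import Reals.
From Coquelicot Require Import Coquelicot.
Open Scope R_scope.

Definition inTheta (tb x : R) : Prop := 0 <= x <= tb.

Definition cdf_with_density (tb : R) (F f : R -> R) : Prop :=
  (forall x, inTheta tb x ->
     filterlim f (within (inTheta tb) (locally x)) (locally (f x))) /\
  (forall x, inTheta tb x -> 0 < f x) /\
  (forall x, inTheta tb x -> F x = RInt f 0 x) /\
  F tb = 1 /\
  (forall x, tb <= x -> F x = 1).

Definition Jvv (F f : R -> R) (t : R) : R := t - (1 - F t) / f t.

Definition MPS (tb : R) (f : R -> R) (a b : R -> R) : Prop :=
  (forall x, inTheta tb x ->
     RInt (fun t => b t * f t) x tb <= RInt (fun t => a t * f t) x tb) /\
  RInt (fun t => b t * f t) 0 tb = RInt (fun t => a t * f t) 0 tb.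

Definition S0 (tb : R) (F f : R -> R) (s : R -> R) : Prop :=
  (forall x y, inTheta tb x -> inTheta tb y -> x <= y -> s x <= s y) /\
  (forall x, inTheta tb x -> 0 <= s x <= 1) /\
  MPS tb f F s.

Definition R2 (F : R -> R) : Rbar :=
  Lub_Rbar (fun r => exists p, 0 <= p /\ r = p * (1 - F (2 * p))).

Definition noExclRev (tb : R) (F f : R -> R) : Rbar :=
  Lub_Rbar (fun r => exists s, S0 tb F f s /\
                      r = RInt (fun t => Jvv F f t * s t * f t) 0 tb).

(* Main.v *)
Require Import Defs.
From Stdlib Require Import Reals Lra Lia Classical.
From Coquelicot Require Import Coquelicot.
Open Scope R_scope.

Lemma RInt_not_ex (g : R -> R) a b : ~ ex_RInt g a b -> RInt g a b = 0.
Proof.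
  intro H. unfold RInt, iota, lim. simpl. unfold R_complete_lim.
  set (E := fun x : R => _).
  destruct (Lub_Rbar_correct E) as [Hub _].
  assert (HE : forall x, E x).
  { intro x. unfold E. intros y Hy. exfalso. apply H. exists y. exact Hy. }
  destruct (Lub_Rbar E) as [l| |] eqn:Hl; simpl; auto.
  - specialize (Hub (l+1) (HE _)). simpl in Hub. lra.
Qed.

Definition clamp (tb x : R) := Rmax 0 (Rmin tb x).

Lemma clamp_in tb x : 0 <= tb -> inTheta tb (clamp tb x).
Proof. intros. unfold inTheta, clamp, Rmax, Rmin. repeat destruct Rle_dec; lra. Qed.

Lemma clamp_lip tb x y : 0 <= tb -> Rabs (clamp tb y - clamp tb x) <= Rabs (y - x).
Proof. intros. unfold clamp, Rmax, Rmin. repeat destruct Rle_dec; unfold Rabs; repeat destruct Rcase_abs; lra. Qed.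

Lemma clamp_id tb x : inTheta tb x -> clamp tb x = x.
Proof. unfold inTheta, clamp, Rmax, Rmin. intros. repeat destruct Rle_dec; lra. Qed.

Lemma clamp_cont tb (f : R -> R) x : 0 <= tb ->
  (forall x, inTheta tb x -> filterlim f (within (inTheta tb) (locally x)) (locally (f x))) ->
  continuous (fun y => f (clamp tb y)) x.
Proof.
  intros Htb Hf.
  unfold continuous.
  eapply filterlim_comp with (G := within (inTheta tb) (locally (clamp tb x))).
  2: apply Hf, clamp_in, Htb.
  intros P [eps He]. exists eps. intros y Hy.
  apply He. 2: apply clamp_in, Htb.
  unfold ball in *; simpl in *; unfold AbsRing_ball, abs, minus, plus, opp in *; simpl in *.
  eapply Rle_lt_trans. apply clamp_lip, Htb. exact Hy.
Qed.

Definition fe tb (f : R -> R) x := f (clamp tb x).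
Definition Fe tb f x := RInt (fe tb f) 0 x.
Definition He tb f x := x * (1 - Fe tb f x).
Definition dHe tb f x := (1 - Fe tb f x) - x * fe tb f x.

Section S.
Lemma fe_cont tb F f x : 0 <= tb -> cdf_with_density tb F f -> continuous (fe tb f) x.
Proof. intros Htb [Hc _]. apply clamp_cont; auto. Qed.

Lemma Fe_is tb F f b : 0 <= tb -> cdf_with_density tb F f -> is_RInt (fe tb f) 0 b (Fe tb f b).
Proof.
  intros Htb Hd. unfold Fe. apply (@RInt_correct R_CompleteNormedModule), ex_RInt_continuous. intros; eapply fe_cont; eauto.
Qed.

Lemma Fe_der tb F f x : 0 <= tb -> cdf_with_density tb F f -> is_derive (Fe tb f) x (fe tb f x).
Proof.
  intros Htb Hd. apply is_derive_RInt with (a := 0).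
  - apply filter_forall. intro b. eapply Fe_is; eauto.
  - eapply fe_cont; eauto.
Qed.

Lemma Fe_eq tb F f x : cdf_with_density tb F f -> inTheta tb x -> Fe tb f x = F x.
Proof.
  intros Hd Hx. destruct Hd as (_ & _ & HF & _). rewrite HF by exact Hx.
  unfold Fe. apply RInt_ext. intros t Ht. unfold fe. rewrite clamp_id; auto.
  unfold inTheta in *. unfold Rmin, Rmax in Ht. destruct Rle_dec; lra.
Qed.

Lemma He_der tb F f x : 0 <= tb -> cdf_with_density tb F f -> is_derive (He tb f) x (dHe tb f x).
Proof.
  intros Htb Hd.
  assert (H1 := is_derive_mult (fun t => t) (fun t => 1 - Fe tb f t) x one (0 - fe tb f x)).
  assert (H2 : is_derive (fun t => 1 - Fe tb f t) x (0 - fe tb f x)).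
  { apply (is_derive_minus (fun _ => 1) (Fe tb f) x 0 (fe tb f x)).
    exact (@is_derive_const R_AbsRing R_NormedModule 1 x). eapply Fe_der; eauto. }
  specialize (H1 (is_derive_id x) H2 Rmult_comm).
  unfold He, dHe.
  replace (1 - Fe tb f x - x * fe tb f x) with
    (plus (mult one (1 - Fe tb f x)) (mult x (0 - fe tb f x))).
  exact H1.
  unfold plus, mult, one; simpl. ring.
Qed.

Lemma dHe_cont tb F f x : 0 <= tb -> cdf_with_density tb F f -> continuous (dHe tb f) x.
Proof.
  intros Htb Hd. unfold dHe.
  apply (continuous_minus (fun t => 1 - Fe tb f t) (fun t => t * fe tb f t)).
  - apply (continuous_minus (fun _ => 1) (Fe tb f)). apply continuous_const.
    apply ex_derive_continuous. eexists. eapply Fe_der; eauto.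
  - apply (continuous_mult (fun t => t) (fe tb f)). apply continuous_id.
    eapply fe_cont; eauto.
Qed.
End S.

Lemma int_dHe tb F f a b : 0 <= tb -> cdf_with_density tb F f ->
  is_RInt (dHe tb f) a b (He tb f b - He tb f a).
Proof.
  intros Htb Hd. apply (is_RInt_derive (He tb f) (dHe tb f) a b).
  - intros; eapply He_der; eauto.
  - intros; eapply dHe_cont; eauto.
Qed.

Lemma g_eq tb F f (s : R -> R) t : cdf_with_density tb F f -> inTheta tb t ->
  Jvv F f t * s t * f t = - dHe tb f t * s t.
Proof.
  intros Hd Ht. unfold dHe, Jvv. rewrite (Fe_eq tb F f t Hd Ht).
  unfold fe. rewrite clamp_id by exact Ht.
  destruct Hd as (_ & Hpos & _). specialize (Hpos t Ht).
  field. lra.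
Qed.

Lemma key tb F f s M : 0 < tb -> cdf_with_density tb F f ->
  (forall x y, inTheta tb x -> inTheta tb y -> x <= y -> s x <= s y) ->
  (forall x, inTheta tb x -> 0 <= s x <= 1) -> 0 <= M ->
  (forall x, inTheta tb x -> x * (1 - F x) <= M) ->
  RInt (fun t => Jvv F f t * s t * f t) 0 tb <= M.
Proof.
  intros Htb Hd Hmon Hs HM HH.
  set (g := fun t => Jvv F f t * s t * f t).
  destruct (classic (ex_RInt g 0 tb)) as [Hex|Hnex];
    [|rewrite RInt_not_ex; auto].
  assert (Htb0 : 0 <= tb) by lra.
  destruct (continuity_ab_maj (dHe tb f) 0 tb) as [Mx [HMx _]]. lra.
  { intros; apply continuity_pt_filterlim; eapply dHe_cont; eauto. }
  set (K := Rmax 0 (dHe tb f Mx)).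
  assert (HK0 : 0 <= K) by apply Rmax_l.
  assert (HK : forall c, 0 <= c <= tb -> dHe tb f c <= K).
  { intros c Hc. eapply Rle_trans. apply HMx, Hc. apply Rmax_r. }
  assert (HeH : forall x, inTheta tb x -> He tb f x = x * (1 - F x)).
  { intros x Hx. unfold He. rewrite (Fe_eq tb F f x Hd Hx). reflexivity. }
  assert (Hstep : forall a b, 0 <= a -> a <= b -> b <= tb ->
     RInt g a b <= s b * (He tb f a - He tb f b) + K * (s b - s a) * (b - a)).
  { intros a b H0a Hab Hbt.
    assert (exab : ex_RInt g a b).
    { apply (ex_RInt_Chasles_2 g 0 a b). lra.
      apply (ex_RInt_Chasles_1 g 0 b tb). lra. exact Hex. }
    set (c := K * (s b - s a)).
    assert (Hi : is_RInt (fun t => plus (scal (s b) (opp (dHe tb f t))) c) a b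
                   (plus (scal (s b) (opp (He tb f b - He tb f a))) (scal (b-a) c))).
    { apply (is_RInt_plus (V := R_NormedModule)).
      apply (is_RInt_scal (V := R_NormedModule)), (is_RInt_opp (V := R_NormedModule)). eapply int_dHe; eauto.
      apply (is_RInt_const (V := R_NormedModule)). }
    apply Rle_trans with (RInt (fun t => plus (scal (s b) (opp (dHe tb f t))) c) a b).
    - apply RInt_le; auto. eexists; exact Hi.
      intros t Ht. unfold g. rewrite (g_eq tb F f s t Hd) by (unfold inTheta; lra).
      unfold plus, scal, opp, mult; simpl. unfold mult; simpl.
      assert (Hta : s a <= s t) by (apply Hmon; unfold inTheta; lra).
      assert (Htb' : s t <= s b) by (apply Hmon; unfold inTheta; lra).
      assert (Hd1 : dHe tb f t <= K) by (apply HK; lra).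
      assert (P1 : 0 <= (K - dHe tb f t) * (s b - s t)) by (apply Rmult_le_pos; lra).
      assert (P2 : 0 <= K * (s t - s a)) by (apply Rmult_le_pos; lra).
      unfold c. nra.
    - rewrite (is_RInt_unique _ _ _ _ Hi). unfold plus, scal, opp, mult; simpl.
      unfold mult; simpl. unfold c. apply Req_le. ring. }
  assert (Hall : forall N, (0 < N)%nat -> RInt g 0 tb <= M + K * tb * / INR N).
  { intros N HN.
    assert (HNp : 0 < INR N) by (apply lt_0_INR; exact HN).
    set (D := tb / INR N).
    assert (HD : 0 < D) by (unfold D; apply Rdiv_lt_0_compat; lra).
    assert (Hind : forall k, (k <= N)%nat ->
      RInt g 0 (INR k * D) <= - s (INR k * D) * He tb f (INR k * D)
          + s (INR k * D) * M + K * D * (s (INR k * D) - s 0)).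
    { induction k as [|k IH]; intros Hk.
      - simpl. rewrite Rmult_0_l. rewrite RInt_point.
        assert (Hs0 := Hs 0 (conj (Rle_refl 0) Htb0)).
        unfold He. unfold zero; simpl. nra.
      - set (a := INR k * D). set (b := INR (S k) * D).
        assert (Hba : b = a + D) by (unfold a, b; rewrite S_INR; ring).
        assert (Hk' : INR (S k) <= INR N) by (apply le_INR; exact Hk).
        assert (H0a : 0 <= a) by (unfold a; apply Rmult_le_pos; [apply pos_INR|lra]).
        assert (Hbt : b <= tb).
        { unfold b, D. assert (E: tb = INR N * (tb / INR N)) by (field; apply Rgt_not_eq; lra). rewrite E at 2.
          apply Rmult_le_compat_r; [apply Rlt_le, HD|exact Hk']. }
        specialize (IH ltac:(lia)). fold a in IH.
        assert (Hex0a : ex_RInt g 0 a).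
        { apply (ex_RInt_Chasles_1 g 0 a tb). lra. exact Hex. }
        assert (Hexab : ex_RInt g a b).
        { apply (ex_RInt_Chasles_2 g 0 a b). lra.
          apply (ex_RInt_Chasles_1 g 0 b tb). lra. exact Hex. }
        rewrite <- (RInt_Chasles g 0 a b Hex0a Hexab).
        assert (Hst := Hstep a b H0a ltac:(lra) Hbt).
        assert (Hsab : s a <= s b) by (apply Hmon; unfold inTheta; lra).
        assert (Hsa : 0 <= s a <= 1) by (apply Hs; unfold inTheta; lra).
        assert (HHa : He tb f a <= M) by (rewrite HeH by (unfold inTheta; lra); apply HH; unfold inTheta; lra).
        assert (P1 : 0 <= (s b - s a) * (M - He tb f a)) by (apply Rmult_le_pos; lra).
        replace (b - a) with D in Hst by lra.
        unfold plus; simpl. nra. }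
    specialize (Hind N (le_n N)).
    replace (INR N * D) with tb in Hind by (unfold D; field; lra).
    assert (Hetb : He tb f tb = 0).
    { rewrite HeH by (unfold inTheta; lra). destruct Hd as (_ & _ & _ & HF1 & _).
      rewrite HF1. ring. }
    rewrite Hetb in Hind.
    assert (Hs0 := Hs 0 (conj (Rle_refl 0) Htb0)).
    assert (Hst := Hs tb (conj Htb0 (Rle_refl tb))).
    assert (P1 : 0 <= K * D * (1 - s tb + s 0)) by (apply Rmult_le_pos; [apply Rmult_le_pos|]; lra).
    assert (P2 : 0 <= (1 - s tb) * M) by (apply Rmult_le_pos; lra).
    unfold D in *. unfold Rdiv in *. nra. }
  destruct (Rle_lt_dec (RInt g 0 tb) M) as [Hle|Hlt]; [exact Hle|exfalso].
  assert (Heps : 0 < (RInt g 0 tb - M) / (K * tb + 1)).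
  { apply Rdiv_lt_0_compat. lra. assert (0 <= K * tb) by (apply Rmult_le_pos; lra). lra. }
  destruct (archimed_cor1 _ Heps) as [N [HN1 HN2]].
  specialize (Hall N HN2).
  assert (HNp : 0 < / INR N) by (apply Rinv_0_lt_compat, lt_0_INR; exact HN2).
  assert (HKt : 0 <= K * tb) by (apply Rmult_le_pos; lra).
  assert (H1 : (K * tb + 1) * / INR N < (K * tb + 1) * ((RInt g 0 tb - M) / (K * tb + 1))).
  { apply Rmult_lt_compat_l; lra. }
  replace ((K * tb + 1) * ((RInt g 0 tb - M) / (K * tb + 1))) with (RInt g 0 tb - M) in H1 by (field; lra).
  nra.
Qed.

Theorem mainTheorem13 (tb : R) (F f : R -> R) :
  0 < tb ->
  cdf_with_density tb F f ->
  Rbar_le (Rbar_mult (Finite (1/2)) (noExclRev tb F f)) (R2 F).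
Proof.
  intros Htb Hd.
  unfold R2.
  set (E2 := fun r => exists p, 0 <= p /\ r = p * (1 - F (2 * p))).
  destruct (Lub_Rbar_correct E2) as [Hub2 _].
  assert (H0 : E2 0) by (exists 0; split; [lra|ring]).
  destruct (Lub_Rbar E2) as [m| |] eqn:Hm.
  2: { destruct (Rbar_mult _ _); simpl; auto. }
  2: { specialize (Hub2 0 H0). simpl in Hub2. contradiction. }
  assert (Hm0 : 0 <= m) by (exact (Hub2 0 H0)).
  assert (HH : forall x, inTheta tb x -> x * (1 - F x) <= 2 * m).
  { intros x Hx. assert (Ex : E2 ((x/2) * (1 - F (2 * (x/2))))).
    { exists (x/2). split. unfold inTheta in Hx; lra. reflexivity. }
    specialize (Hub2 _ Ex). simpl in Hub2.
    replace (2 * (x/2)) with x in Hub2 by field. lra. }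
  unfold noExclRev.
  set (E := fun r => exists s, S0 tb F f s /\ r = RInt (fun t => Jvv F f t * s t * f t) 0 tb).
  destruct (Lub_Rbar_correct E) as [_ Hlub].
  assert (Hub : is_ub_Rbar E (2 * m)).
  { intros r [s [[Hmon [Hs _]] Hr]]. subst r. simpl.
    apply key; auto. lra. }
  specialize (Hlub _ Hub).
  change (Rbar_le (Rbar_mult (Finite (1/2)) (Lub_Rbar E)) (Finite m)).
  destruct (Lub_Rbar E) as [l| |].
  - simpl in *. lra.
  - simpl in Hlub. contradiction.
  - simpl. destruct (Rle_dec 0 (1/2)) as [r|r]; [destruct (Rle_lt_or_eq_dec 0 (1/2) r)|]; simpl; auto; lra.
Qed.
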